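(* Let $n\ge3$, let $\boldsymbol\ell=(\ell_1,\ldots,\ell_n)$ be positive numbers, let $\mathbf b=(b_1,\ldots,b_n)$ be a vector of offset Kasner exponents, and let $\mu,\tau_0$ be nonzero constants. Then the CMC conformal data set $(g_{\boldsymbol\ell},\mu\,\sigma_{\mathbf b,\boldsymbol\ell},\tau_0)$ on $T^n$ determines (generates exactly one solution of the constraint equations, namely) the Cauchy data of the slice $t=t_0:=1/\tau_0$ of a Kasner spacetime, which is expanding if $\tau_0>0$ and contracting if $\tau_0<0$. Its Kasner exponents are $\mathbf a=s\mathbf b+(\frac1n,\ldots,\frac1n)$, where $s=1$ if $\mu$ and $\tau_0$ have the same sign and $s=-1$ otherwise. The slice $t=t_0$ has metric $c^{q-2}g_{\boldsymbol\ell}$ with $c=|\mu/\tau_0|^{1/q}$, and the slice $t=\mathrm{sgn}(t_0)$ of this spacetime has metric $g_{\bar{\boldsymbol\ell}}$, where $\bar\ell_k=|t_0|^{-a_k}c^{q/2-1}\ell_k$.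
   Context: $q=\frac{2n}{n-2}$, $\kappa=\frac{n-1}{n}$. $T^n=(\mathbb{R}/\mathbb{Z})^n$ with unit coordinates $(s^1,\ldots,s^n)$; $g_{\boldsymbol\ell}=\sum_k\ell_k^2(ds^k)^2$. Offset Kasner exponents: $\mathbf b\in\mathbb{R}^n$ with $\sum_kb_k=0$ and $\sum_kb_k^2=\kappa$. Then $\sigma_{\mathbf b,\boldsymbol\ell}=\sum_kb_k\ell_k^2(ds^k)^2$ is transverse-traceless for $g_{\boldsymbol\ell}$. CMC conformal method: a data set $(g,\sigma,\tau_0)$ ($\sigma$ transverse-traceless, $\tau_0$ constant) generates the solutions $\bar g=\phi^{q-2}g$, $\bar K=\phi^{-2}\sigma+\frac{\tau_0}{n}\bar g$ of the Einstein constraint equations $R_{\bar g}-|\bar K|^2+(\mathrm{tr}\bar K)^2=0$, $\mathrm{div}_{\bar g}\bar K=d\,\mathrm{tr}\bar K$, one for each positive solution $\phi$ of $-2\kappa q\Delta_g\phi+R_g\phi-|\sigma|_g^2\phi^{-q-1}+\kappa\tau_0^2\phi^{q-1}=0$. A Kasner spacetime with exponents $\mathbf a$ ($\sum a_k=1$, $\sum a_k^2=1$) and lengths $\bar{\boldsymbol\ell}$ is $\mathbb{R}_+\times T^n$ (expanding) or $\mathbb{R}_-\times T^n$ (contracting) with metric $-dt^2+\sum_k|t|^{2a_k}\bar\ell_k^2(ds^k)^2$, time-oriented by $\partial_t$. The Cauchy data of a slice $\{t=t_0\}$ is its induced metric and second fundamental form $K(X,Y)=-\langle\partial_t,\nabla_XY\rangle$.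 *)

(* Defs.v *)
From HB Require Import structures.
From mathcomp Require Import all_boot all_order all_algebra.
From mathcomp Require Import all_classical all_reals all_analysis.
Set Implicit Arguments. Unset Strict Implicit. Unset Printing Implicit Defensive.
Import Order.TTheory GRing.Theory Num.Theory.
Import numFieldNormedType.Exports.
Local Open Scope ring_scope.

Section Defs.
Variable R : realType.

Definition qexp (n : nat) : R := 2 * n%:R / (n%:R - 2).
Definition kappa (n : nat) : R := (n%:R - 1) / n%:R.

Definition ev (n : nat) (i : 'I_n) : 'rV[R]_n := delta_mx 0 i.

Definition pd (n : nat) (i : 'I_n) (f : 'rV[R]_n -> R) (x : 'rV[R]_n) : R :=
  'D_(ev i) f x.

(* Functions on T^n = (R/Z)^n are Z^n-periodic functions of the unit
   coordinates s = (s^1,...,s^n). *)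
Definition periodic (n : nat) (f : 'rV[R]_n -> R) : Prop :=
  forall (x : 'rV[R]_n) (i : 'I_n), f (x + ev i) = f x.

Definition torus_C2 (n : nat) (f : 'rV[R]_n -> R) : Prop :=
  periodic f /\ continuous f /\
  (forall i x, derivable f x (ev i)) /\
  (forall i, continuous (pd i f)) /\
  (forall i j x, derivable (pd j f) x (ev i)) /\
  (forall i j, continuous (pd i (pd j f))).

(* A symmetric 2-tensor field on T^n in the coordinates s: its matrix of
   components g_{ij}(s). *)
Definition tensor_field (n : nat) := 'rV[R]_n -> 'M[R]_n.

Definition g_len (n : nat) (l : 'I_n -> R) : tensor_field n :=
  fun _ => \matrix_(i, j) (if i == j then l i ^+ 2 else 0).

Definition sigma_bl (n : nat) (b l : 'I_n -> R) : tensor_field n :=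
  fun _ => \matrix_(i, j) (if i == j then b i * l i ^+ 2 else 0).

Definition offset_kasner (n : nat) (b : 'I_n -> R) : Prop :=
  \sum_k b k = 0 /\ \sum_k b k ^+ 2 = kappa n.

Definition kasner_exponents (n : nat) (a : 'I_n -> R) : Prop :=
  \sum_k a k = 1 /\ \sum_k a k ^+ 2 = 1.

Definition ginv (n : nat) (g : tensor_field n) (x : 'rV[R]_n) : 'M[R]_n :=
  invmx (g x).

Definition christoffel (n : nat) (g : tensor_field n) (k i j : 'I_n)
  (x : 'rV[R]_n) : R :=
  \sum_l ginv g x k l / 2 *
    (pd i (fun y => g y l j) x + pd j (fun y => g y l i) x
     - pd l (fun y => g y i j) x).

Definition ricci (n : nat) (g : tensor_field n) (i j : 'I_n) (x : 'rV[R]_n) : R :=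
  \sum_k (pd k (christoffel g k i j) x - pd j (christoffel g k i k) x)
  + \sum_k \sum_l (christoffel g k k l x * christoffel g l i j x
                   - christoffel g k j l x * christoffel g l i k x).

Definition scalar_curv (n : nat) (g : tensor_field n) (x : 'rV[R]_n) : R :=
  \sum_i \sum_j ginv g x i j * ricci g i j x.

Definition laplacian (n : nat) (g : tensor_field n) (phi : 'rV[R]_n -> R)
  (x : 'rV[R]_n) : R :=
  \sum_i \sum_j ginv g x i j *
    (pd i (pd j phi) x - \sum_k christoffel g k i j x * pd k phi x).

Definition tnorm2 (n : nat) (g s : tensor_field n) (x : 'rV[R]_n) : R :=
  \sum_i \sum_j \sum_k \sum_l
    ginv g x i k * ginv g x j l * s x i j * s x k l.

Definition lichnerowicz (n : nat) (g sigma : tensor_field n) (tau0 : R)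
  (phi : 'rV[R]_n -> R) : Prop :=
  forall x, - (2 * kappa n * qexp n) * laplacian g phi x
            + scalar_curv g x * phi x
            - tnorm2 g sigma x * phi x `^ (- qexp n - 1)
            + kappa n * tau0 ^+ 2 * phi x `^ (qexp n - 1) = 0.

Definition conformal_factor (n : nat) (g sigma : tensor_field n) (tau0 : R)
  (phi : 'rV[R]_n -> R) : Prop :=
  [/\ torus_C2 phi, forall x, 0 < phi x & lichnerowicz g sigma tau0 phi].

Definition generated_solution (n : nat) (g sigma : tensor_field n) (tau0 : R)
  (phi : 'rV[R]_n -> R) : tensor_field n * tensor_field n :=
  (fun x => phi x `^ (qexp n - 2) *: g x,
   fun x => (phi x ^+ 2)^-1 *: sigma x
            + (tau0 / n%:R) *: (phi x `^ (qexp n - 2) *: g x)).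

(* ---- Spacetime R x T^n in coordinates (t, s^1, ..., s^n);
   index 0 is t, index lift ord0 k is s^k. ---- *)
Definition st_field (n : nat) := 'rV[R]_n.+1 -> 'M[R]_n.+1.

Definition st_point (n : nat) (t : R) (x : 'rV[R]_n) : 'rV[R]_n.+1 :=
  \row_(i < n.+1) (if unlift ord0 i is Some k then x 0 k else t).

Definition sidx (n : nat) (k : 'I_n) : 'I_n.+1 := lift ord0 k.

Definition christoffel1 (n : nat) (G : st_field n) (mu nu la : 'I_n.+1)
  (p : 'rV[R]_n.+1) : R :=
  (pd nu (fun y => G y mu la) p + pd la (fun y => G y mu nu) p
   - pd mu (fun y => G y nu la) p) / 2.

(* Cauchy data (induced metric, second fundamental form
   K(X,Y) = -<d_t, nabla_X Y>) of the slice {t = t0} *)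
Definition slice_metric (n : nat) (G : st_field n) (t0 : R) : tensor_field n :=
  fun x => \matrix_(j, k) G (st_point t0 x) (sidx j) (sidx k).

Definition slice_sff (n : nat) (G : st_field n) (t0 : R) : tensor_field n :=
  fun x => \matrix_(j, k) - christoffel1 G ord0 (sidx j) (sidx k) (st_point t0 x).

Definition cauchy_data (n : nat) (G : st_field n) (t0 : R)
  : tensor_field n * tensor_field n :=
  (slice_metric G t0, slice_sff G t0).

Definition kasner_metric (n : nat) (a lbar : 'I_n -> R) : st_field n :=
  fun p => \matrix_(mu, nu)
    (if mu == nu then
       (if unlift ord0 mu is Some k then `|p 0 0| `^ (2 * a k) * lbar k ^+ 2
        else -1)
     else 0).

Definition kasner_domain (expanding : bool) (t : R) : Prop :=
  if expanding then 0 < t else t < 0.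

End Defs.

(* Main.v *)
Require Import Defs.
From HB Require Import structures.
From mathcomp Require Import all_boot all_order all_algebra.
From mathcomp Require Import all_classical all_reals all_analysis.
Import Order.TTheory GRing.Theory Num.Theory.
Import numFieldNormedType.Exports.
Local Open Scope ring_scope.

From mathcomp Require Import ring lra.

Section H.
Variable R : realType.
Local Open Scope classical_set_scope.

Lemma periodic_nat n (f : 'rV[R]_n -> R) i x (k : nat) :
  Defs.periodic f -> f (x + k%:R *: ev R i) = f x.
Proof.
move=> P; elim: k => [|k IH]; first by rewrite scale0r addr0.
by rewrite -natr1 scalerDl scale1r addrA P.
Qed.

Lemma periodic_int n (f : 'rV[R]_n -> R) i x (m : int) :
  Defs.periodic f -> f (x + m%:~R *: ev R i) = f x.
Proof.
move=> P; case: m => k.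
  by rewrite -pmulrn periodic_nat.
rewrite NegzE mulrNz scaleNr.
have := @periodic_nat n f i (x - (k.+1)%:R *: ev R i) k.+1 P.
by rewrite subrK => ->.
Qed.

Lemma periodic_seq n (f : 'rV[R]_n -> R) (m : 'I_n -> int) x (s : seq 'I_n) :
  Defs.periodic f -> f (x - \sum_(k <- s) (m k)%:~R *: ev R k) = f x.
Proof.
move=> P; elim: s => [|a s IH]; first by rewrite big_nil subr0.
rewrite big_cons opprD addrA addrAC.
have := @periodic_int n f a (x - \sum_(k <- s) (m k)%:~R *: ev R k) (- m a) P.
rewrite mulrNz scaleNr => ->; exact: IH.
Qed.

Lemma ev_entry n (i k : 'I_n) : (ev R i) 0 k = (i == k)%:R.
Proof. by rewrite /ev mxE eqxx /= eq_sym. Qed.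

Lemma sum_ev_entry n (c : 'I_n -> R) k :
  (\sum_i c i *: ev R i) 0 k = c k.
Proof.
rewrite summxE (bigD1 k) //= big1 ?addr0; first by rewrite mxE ev_entry eqxx mulr1.
by move=> i /negbTE ik; rewrite mxE ev_entry ik mulr0.
Qed.

Lemma periodic_reduce n (f : 'rV[R]_n -> R) y :
  Defs.periodic f -> exists z : 'rV[R]_n, (forall i, 0 <= z 0 i <= 1) /\ f z = f y.
Proof.
move=> P.
exists (y - \sum_i (Num.floor (y 0 i))%:~R *: ev R i); split.
  move=> i; rewrite !mxE sum_ev_entry.
  have := floor_le (y 0 i); have := floorD1_gt (y 0 i); rewrite intrD /=.
  move=> h1 h2; apply/andP; split; lra.
exact: (@periodic_seq n f).
Qed.

Lemma periodic_max n (f : 'rV[R]_n -> R) :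
  Defs.periodic f -> continuous f -> exists xM, forall y, f y <= f xM.
Proof.
move=> P C.
pose A := [set v : 'rV[R]_n | forall i, `[(0:R), 1] (v ord0 i)].
have cA : compact A.
  by apply: (@rV_compact _ _ (fun=> `[(0:R), 1])) => _; exact: segment_compact.
have A0 : A !=set0.
  by exists 0 => i; rewrite /= mxE in_itv /=; apply/andP; split => //; lra.
have [c _ Hc] := EVT_max_rV A0 cA (continuous_subspaceT C).
exists c => y.
have [z [zA <-]] := @periodic_reduce n f y P.
apply: Hc; rewrite inE => i /=; rewrite in_itv /=; exact: zA.
Qed.

Lemma line_derivable m (f : 'rV[R]_m -> R) a v t :
  derivable (fun s : R => f (a + s *: v)) t 1 <-> derivable f (a + t *: v) v.
Proof.
rewrite /derivable.
have -> : (fun h : R => h^-1 *: (((fun s : R => f (a + s *: v)) \o shift t) (h *: 1) - f (a + t *: v)))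
  = (fun h : R => h^-1 *: ((f \o shift (a + t *: v)) (h *: v) - f (a + t *: v))).
  apply: funext => h /=; congr (_ *: (f _ - _)).
  by rewrite /= scaler1 scalerDl addrC -addrA [_ + t *: v]addrC addrA.
by [].
Qed.

Lemma line_derive m (f : 'rV[R]_m -> R) a v t :
  'D_1 (fun s : R => f (a + s *: v)) t = 'D_v f (a + t *: v).
Proof.
rewrite /derive.
have -> : (fun h : R => h^-1 *: (((fun s : R => f (a + s *: v)) \o shift t) (h *: 1) - f (a + t *: v)))
  = (fun h : R => h^-1 *: ((f \o shift (a + t *: v)) (h *: v) - f (a + t *: v))).
  apply: funext => h /=; congr (_ *: (f _ - _)).
  by rewrite /= scaler1 scalerDl addrC -addrA [_ + t *: v]addrC addrA.
by [].
Qed.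

Lemma pd_const n (i : 'I_n) (f : 'rV[R]_n -> R) x :
  (forall y z, f y = f z) -> pd i f x = 0.
Proof.
move=> H; rewrite /pd (_ : f = cst (f 0)); first exact: derive_cst.
by apply: funext => y; apply: H.
Qed.

Lemma second_der_max (h h1 : R -> R) (d : R) :
  (forall t : R, is_derive t (1:R) h (h1 t)) -> is_derive (0:R) (1:R) h1 d ->
  (forall t, h t <= h 0) -> d <= 0.
Proof.
move=> hd h1d hmax.
have dh : forall t : R, derivable h t 1 by move=> t; case: (hd t).
have h10 : h1 0 = 0.
  have := @derive1_at_max R h (-1) 1 0 ltac:(lra) (fun t _ => dh t)
    ltac:(by rewrite in_itv/=; lra) (fun t _ => hmax t).
  move=> [_ e1]; case: (hd 0) => _ e2; by rewrite -e2 e1.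
rewrite leNgt; apply/negP => d0.
have [hc dv] := h1d.
have cv : (fun t : R => t^-1 *: ((h1 \o shift 0) (t *: 1) - h1 0)) @ 0^' --> d.
  by rewrite -dv; exact: hc.
have cv' : (fun t : R => t^-1 * h1 t) @ 0^' --> d.
  suff <- : (fun t : R => t^-1 *: ((h1 \o shift 0) (t *: 1) - h1 0)) = (fun t : R => t^-1 * h1 t) by [].
  by apply: funext => t /=; rewrite h10 subr0 addr0 /GRing.scale /= mulr1.
have := @cvgr_gt _ _ _ _ _ _ cv' (d / 2) ltac:(lra).
move=> /nbhs_ballP [e /= e0 He].
have pos : forall t, 0 < t < e -> 0 < h1 t.
  move=> t /andP[t0 te].
  have := He t; rewrite /ball /= sub0r normrN gtr0_norm // => /(_ te (lt0r_neq0 t0)).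
  move=> ht. have : 0 < t^-1 * h1 t by lra.
  by rewrite pmulr_rgt0 // invr_gt0.
have e20 : 0 < e / 2 by lra.
have hcont : continuous h.
  by move=> x; apply: differentiable_continuous; apply/derivable1_diffP; exact: dh.
have [c cI hcE] := @MVT R h h1 0 (e/2) e20 (fun x _ => hd x) (continuous_subspaceT hcont).
move: cI; rewrite in_itv /= => /andP[c0 ce].
have := pos c ltac:(apply/andP; split; lra).
have := hmax (e/2).
move=> H1 H2.
have : 0 < h1 c * (e/2 - 0) by rewrite subr0 mulr_gt0.
lra.
Qed.
Lemma second_der_min (h h1 : R -> R) (d : R) :
  (forall t : R, is_derive t (1:R) h (h1 t)) -> is_derive (0:R) (1:R) h1 d ->
  (forall t, h 0 <= h t) -> 0 <= d.
Proof.
move=> hd h1d hmin.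
have H1 : forall t : R, is_derive t (1:R) (fun t => - h t) (- h1 t).
  move=> t; have H := is_deriveN (hd t); exact H.
have H2 : is_derive (0:R) (1:R) (fun t => - h1 t) (- d).
  have H := is_deriveN h1d; exact H.
have H3 : forall t, - h t <= - h 0 by move=> t; rewrite lerN2.
by have := @second_der_max _ _ _ H1 H2 H3; rewrite oppr_le0.
Qed.

Lemma line_is_derive m (f : 'rV[R]_m -> R) a v t :
  derivable f (a + t *: v) v ->
  is_derive t (1:R) (fun s : R => f (a + s *: v)) ('D_v f (a + t *: v)).
Proof.
move=> H; apply: DeriveDef; first by apply/line_derivable.
exact: line_derive.
Qed.

Lemma pd2_max n (phi : 'rV[R]_n -> R) xM i :
  (forall i x, derivable phi x (ev R i)) ->
  (forall i j x, derivable (pd j phi) x (ev R i)) ->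
  (forall y, phi y <= phi xM) -> pd i (pd i phi) xM <= 0.
Proof.
move=> d1 d2 mx.
apply: (@second_der_max (fun t => phi (xM + t *: ev R i))
  (fun t => pd i phi (xM + t *: ev R i))).
- by move=> t; apply: line_is_derive.
- have := @line_is_derive n (pd i phi) xM (ev R i) 0 (d2 _ _ _).
  by rewrite scale0r addr0.
- by move=> t; rewrite scale0r addr0.
Qed.

Lemma pd2_min n (phi : 'rV[R]_n -> R) xm i :
  (forall i x, derivable phi x (ev R i)) ->
  (forall i j x, derivable (pd j phi) x (ev R i)) ->
  (forall y, phi xm <= phi y) -> 0 <= pd i (pd i phi) xm.
Proof.
move=> d1 d2 mx.
apply: (@second_der_min (fun t => phi (xm + t *: ev R i))
  (fun t => pd i phi (xm + t *: ev R i))).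
- by move=> t; apply: line_is_derive.
- have := @line_is_derive n (pd i phi) xm (ev R i) 0 (d2 _ _ _).
  by rewrite scale0r addr0.
- by move=> t; rewrite scale0r addr0.
Qed.

End H.

Section G.
Variable R : realType.

Lemma sum_if_eq n (F : 'I_n -> R) i : \sum_k (if i == k then F k else 0) = F i.
Proof.
rewrite (bigD1 i) //= eqxx big1 ?addr0 // => k /negbTE; by rewrite eq_sym => ->.
Qed.

Lemma sum_if_c n (F : 'I_n -> R) (c : bool) :
  \sum_k (if c then F k else 0) = if c then \sum_k F k else 0.
Proof. by case: c => //; rewrite big1. Qed.

Lemma if_mull (c : bool) (a b : R) : (if c then a else 0) * b = if c then a * b else 0.
Proof. by case: c; rewrite ?mul0r. Qed.

Lemma if_mulr (c : bool) (a b : R) : b * (if c then a else 0) = if c then b * a else 0.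
Proof. by case: c; rewrite ?mulr0. Qed.

Lemma mid_if (a b c d : R) (cnd : bool) :
  a * (if cnd then d else 0) * b * c = if cnd then a * d * b * c else 0.
Proof. by case: cnd; rewrite ?mulr0 ?mul0r. Qed.

Lemma if2 (a m x y : R) (cnd : bool) :
  a * (m * (if cnd then x else 0)) * (m * (if cnd then y else 0)) =
  if cnd then a * (m * x) * (m * y) else 0.
Proof. by case: cnd; rewrite ?mulr0 ?mul0r. Qed.

Lemma ginv_glen n (l : 'I_n -> R) x : (forall k, l k != 0) ->
  ginv (g_len l) x = \matrix_(i, j) (if i == j then (l i ^+ 2)^-1 else 0).
Proof.
move=> hl; rewrite /ginv.
set A := g_len l x; set B := \matrix_(i, j) _.
have AB : A *m B = 1%:M.
  apply/matrixP => i j; rewrite !mxE.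
  under eq_bigr => k _ do rewrite !mxE if_mull.
  rewrite sum_if_eq.
  case: (eqVneq i j) => [->|ij]; first by rewrite mulfV // expf_neq0.
  by rewrite mulr0.
have [Au _] := mulmx1_unit AB.
by rewrite -[invmx A]mulmx1 -AB mulmxA mulVmx // mul1mx.
Qed.

Lemma ginv_glen_E n (l : 'I_n -> R) x i j : (forall k, l k != 0) ->
  ginv (g_len l) x i j = if i == j then (l i ^+ 2)^-1 else 0.
Proof. by move=> hl; rewrite ginv_glen // mxE. Qed.

Lemma christoffel_glen n (l : 'I_n -> R) k i j x :
  christoffel (g_len l) k i j x = 0.
Proof.
rewrite /christoffel big1 // => m _.
by rewrite !pd_const ?addr0 ?subr0 ?mulr0.
Qed.

Lemma scalar_curv_glen n (l : 'I_n -> R) x : scalar_curv (g_len l) x = 0.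
Proof.
rewrite /scalar_curv big1 // => i _; rewrite big1 // => j _.
rewrite /ricci.
rewrite big1; last first.
  by move=> k _; rewrite !pd_const ?subrr // => y z; rewrite !christoffel_glen.
rewrite big1; last first.
  by move=> k _; rewrite big1 // => m _; rewrite !christoffel_glen !mul0r subrr.
by rewrite addr0 mulr0.
Qed.

Lemma laplacian_glen n (l : 'I_n -> R) phi x : (forall k, l k != 0) ->
  laplacian (g_len l) phi x = \sum_i (l i ^+ 2)^-1 * pd i (pd i phi) x.
Proof.
move=> hl; rewrite /laplacian; apply: eq_bigr => i _.
have E : forall j, \sum_k christoffel (g_len l) k i j x * pd k phi x = 0.
  by move=> j; rewrite big1 // => k _; rewrite christoffel_glen mul0r.
under eq_bigr => j _ do rewrite E subr0 ginv_glen_E // if_mull.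
by rewrite sum_if_eq.
Qed.

Lemma tnorm2_glen n (l b : 'I_n -> R) (mu : R) x : (forall k, l k != 0) ->
  tnorm2 (g_len l) (fun x => mu *: sigma_bl b l x) x = mu ^+ 2 * \sum_k b k ^+ 2.
Proof.
move=> hl; rewrite /tnorm2.
under eq_bigr => i _ do under eq_bigr => j _ do under eq_bigr => k _ do
  under eq_bigr => m _ do rewrite !ginv_glen_E // !mxE !if_mull.
under eq_bigr => i _ do under eq_bigr => j _ do under eq_bigr => k _ do
  rewrite sum_if_c.
under eq_bigr => i _ do under eq_bigr => j _ do rewrite sum_if_eq.
under eq_bigr => i _ do under eq_bigr => j _ do under eq_bigr => k _ do rewrite mid_if.
under eq_bigr => i _ do under eq_bigr => j _ do rewrite sum_if_eq if2.
under eq_bigr => i _ do rewrite sum_if_eq.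
rewrite big_distrr /=; apply: eq_bigr => i _.
have := hl i => li; field.
by [].
Qed.

End G.

Section P.
Variable R : realType.

Lemma qexp_gt0 n : (3 <= n)%N -> 0 < qexp R n.
Proof.
move=> hn; rewrite /qexp.
have : (3:R) <= n%:R by rewrite (ler_nat R 3 n).
move=> h; apply: divr_gt0; lra.
Qed.

Lemma kappa_gt0 n : (3 <= n)%N -> 0 < kappa R n.
Proof.
move=> hn; rewrite /kappa.
have : (3:R) <= n%:R by rewrite (ler_nat R 3 n).
move=> h; apply: divr_gt0; lra.
Qed.

Lemma cpow (mu tau Q : R) : tau != 0 -> 0 < Q ->
  (`|mu / tau| `^ Q^-1) `^ (2 * Q) = mu ^+ 2 / tau ^+ 2.
Proof.
move=> ht hQ; rewrite -powRrM mulrCA mulVf ?gt_eqF // mulr1.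
by rewrite (@powR_mulrn _ _ 2) // real_normK ?num_real // expr_div_n.
Qed.

Lemma split_pow (M Q : R) : 0 < M -> M `^ (Q - 1) = M `^ (- Q - 1) * M `^ (2 * Q).
Proof.
move=> hM; rewrite -powRD; last by apply/implyP => _; rewrite gt_eqF.
by congr (_ `^ _); ring.
Qed.

Lemma key_identity (K Q mu tau M : R) : 0 < K -> 0 < M -> tau != 0 ->
  (- (mu ^+ 2 * K) * M `^ (- Q - 1) + K * tau ^+ 2 * M `^ (Q - 1)
   = K * tau ^+ 2 * M `^ (- Q - 1) * (M `^ (2 * Q) - mu ^+ 2 / tau ^+ 2)).
Proof.
move=> hK hM ht; rewrite split_pow //; field.
by [].
Qed.

Lemma powR_le_cancel (Q M c : R) : 0 < Q -> 0 <= M -> 0 <= c ->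
  M `^ (2 * Q) <= c `^ (2 * Q) -> M <= c.
Proof.
move=> hQ hM hc H; rewrite leNgt; apply/negP => cM.
have h2Q : 0 < 2 * Q by lra.
have hc' : c \in Num.nneg by rewrite nnegrE.
have hM' : M \in Num.nneg by rewrite nnegrE.
have := gt0_ltr_powR h2Q hc' hM' cM.
lra.
Qed.

End P.

Section U.
Variable R : realType.

Lemma lich_at n (hn : (3 <= n)%N) (l b : 'I_n -> R) mu tau0 phi x :
  (forall k, 0 < l k) -> offset_kasner b ->
  lichnerowicz (g_len l) (fun x => mu *: sigma_bl b l x) tau0 phi ->
  - (2 * kappa R n * qexp R n) * (\sum_i (l i ^+ 2)^-1 * pd i (pd i phi) x)
  - mu ^+ 2 * kappa R n * phi x `^ (- qexp R n - 1)
  + kappa R n * tau0 ^+ 2 * phi x `^ (qexp R n - 1) = 0.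
Proof.
move=> hl [_ hb2] E; have := E x.
have hl' : forall k, l k != 0 by move=> k; rewrite gt_eqF.
rewrite laplacian_glen // scalar_curv_glen tnorm2_glen // hb2 mul0r addr0.
by [].
Qed.

Lemma bound_from_eq (K Q mu tau M D : R) : 0 < K -> 0 < Q -> 0 < M -> tau != 0 ->
  - (2 * K * Q) * D - mu ^+ 2 * K * M `^ (- Q - 1) + K * tau ^+ 2 * M `^ (Q - 1) = 0 ->
  K * tau ^+ 2 * M `^ (- Q - 1) * (M `^ (2 * Q) - mu ^+ 2 / tau ^+ 2) = 2 * K * Q * D.
Proof.
move=> hK hQ hM ht E.
rewrite -key_identity //.
move: E; set X := M `^ (- Q - 1); set Y := M `^ (Q - 1).
move=> E; lra.
Qed.

Lemma sign_le (A Z W T : R) : 0 < A -> A * (Z - W) = T -> T <= 0 -> Z <= W.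
Proof. by move=> hA <-; rewrite pmulr_rle0 // subr_le0. Qed.

Lemma sign_ge (A Z W T : R) : 0 < A -> A * (Z - W) = T -> 0 <= T -> W <= Z.
Proof. by move=> hA <-; rewrite pmulr_rge0 // subr_ge0. Qed.

Lemma phi_unique n (hn : (3 <= n)%N) (l b : 'I_n -> R) mu tau0 phi :
  (forall k, 0 < l k) -> offset_kasner b -> tau0 != 0 ->
  conformal_factor (g_len l) (fun x => mu *: sigma_bl b l x) tau0 phi ->
  phi = fun _ => `|mu / tau0| `^ (qexp R n)^-1.
Proof.
move=> hl hb ht [[P [C [d1 [_ [d2 _]]]]] pos E].
set c := `|mu / tau0| `^ (qexp R n)^-1.
have hK := @kappa_gt0 R n hn; have hQ := @qexp_gt0 R n hn.
have hc0 : 0 <= c by apply: powR_ge0.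
have hc : c `^ (2 * (qexp R n)) = mu ^+ 2 / tau0 ^+ 2 by apply: cpow.
have ht2 : 0 < tau0 ^+ 2 by rewrite exprn_even_gt0.
have Eq x := @bound_from_eq _ _ _ _ _ _ hK hQ (pos x) ht (@lich_at n hn l b mu tau0 phi x hl hb E).
have [xM HM] := @periodic_max R n phi P C.
have [xm Hm] := @periodic_max R n (fun x => - phi x) ltac:(by move=> y i; rewrite P)
  ltac:(by move=> y; apply: continuousN; apply: C).
have DM : \sum_i (l i ^+ 2)^-1 * pd i (pd i phi) xM <= 0.
  apply: sumr_le0 => i _; rewrite pmulr_rle0 ?invr_gt0 ?exprn_gt0 //.
  exact: pd2_max.
have Dm : 0 <= \sum_i (l i ^+ 2)^-1 * pd i (pd i phi) xm.
  apply: sumr_ge0 => i _; rewrite pmulr_rge0 ?invr_gt0 ?exprn_gt0 //.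
  apply: pd2_min => // y; by rewrite -lerN2 Hm.
have pM : 0 < (kappa R n) * tau0 ^+ 2 * phi xM `^ (- (qexp R n) - 1).
  by apply: mulr_gt0; [apply: mulr_gt0 | apply: powR_gt0].
have pm : 0 < (kappa R n) * tau0 ^+ 2 * phi xm `^ (- (qexp R n) - 1).
  by apply: mulr_gt0; [apply: mulr_gt0 | apply: powR_gt0].
have h2KQ : 0 <= 2 * (kappa R n) * (qexp R n) by apply: mulr_ge0; [apply: mulr_ge0 => //; apply: ltW|apply: ltW].
have leM : phi xM <= c.
  apply: (@powR_le_cancel R (qexp R n) _ _ hQ); [exact: ltW | by [] |].
  rewrite hc; apply: (@sign_le _ _ _ _ pM (Eq xM)).
  exact: mulr_ge0_le0.
have gem : c <= phi xm.
  apply: (@powR_le_cancel R (qexp R n) _ _ hQ); [by [] | exact: ltW |].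
  rewrite hc; apply: (@sign_ge _ _ _ _ pm (Eq xm)).
  exact: mulr_ge0.
apply: funext => y.
have h1 := HM y; have h2 := Hm y; rewrite lerN2 in h2.
apply/eqP; rewrite eq_le; apply/andP; split.
  exact: le_trans h1 leM.
exact: le_trans gem h2.
Qed.

End U.

Section C.
Variable R : realType.

Lemma pd_cst_fun n (i : 'I_n) (c : R) : pd i (fun _ : 'rV[R]_n => c) = fun _ => 0.
Proof. by apply: funext => x; rewrite pd_const. Qed.

Lemma const_solution n (hn : (3 <= n)%N) (l b : 'I_n -> R) mu tau0 :
  (forall k, 0 < l k) -> offset_kasner b -> mu != 0 -> tau0 != 0 ->
  conformal_factor (g_len l) (fun x => mu *: sigma_bl b l x) tau0
    (fun _ => `|mu / tau0| `^ (qexp R n)^-1).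
Proof.
move=> hl hb hmu ht.
set c := `|mu / tau0| `^ (qexp R n)^-1.
have hK := @kappa_gt0 R n hn; have hQ := @qexp_gt0 R n hn.
have hc : 0 < c by apply: powR_gt0; rewrite normr_gt0 mulf_neq0 // invr_eq0.
split.
- split; first by [].
  split; first by move=> x; exact: cst_continuous.
  split; first by move=> i x; exact: derivable_cst.
  split; first by move=> i; rewrite pd_cst_fun; move=> x; exact: cst_continuous.
  split; first by move=> i j x; rewrite pd_cst_fun; exact: derivable_cst.
  by move=> i j; rewrite !pd_cst_fun; move=> x; exact: cst_continuous.
- by [].
- move=> x.
  have hl' : forall k, l k != 0 by move=> k; rewrite gt_eqF.
  rewrite laplacian_glen // scalar_curv_glen tnorm2_glen // hb.2 mul0r addr0.
  rewrite big1; last by move=> i _; rewrite !pd_cst_fun mulr0.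
  rewrite mulr0 sub0r -mulNr.
  have := @key_identity R (kappa R n) (qexp R n) mu tau0 c hK hc ht.
  by rewrite (@cpow R mu tau0 (qexp R n) ht hQ) subrr mulr0.
Qed.

End C.

Section K.
Variable R : realType.
Local Open Scope classical_set_scope.

Lemma is_derive1_chain (f g : R -> R) x df dg :
  is_derive x (1:R) f df -> is_derive (f x) (1:R) g dg ->
  is_derive x (1:R) (g \o f) (dg * df).
Proof.
move=> [f1 f2] [g1 g2]; apply: DeriveDef.
  apply/derivable1_diffP; apply: differentiable_comp; exact/derivable1_diffP.
by rewrite -derive1E derive1_comp // !derive1E f2 g2.
Qed.

Lemma is_derive_powR (x r : R) : 0 < x ->
  is_derive x (1:R) (@powR R ^~ r) (r * x `^ (r - 1)).
Proof.
move=> x0; apply: DeriveDef.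
  by apply: derivable_powR; rewrite in_itv /= x0.
by rewrite -derive1E powR_derive1 // in_itv /= x0.
Qed.

Lemma is_derive_affine (s t0 : R) :
  is_derive (0:R) (1:R) (fun u : R => s * (t0 + u)) s.
Proof.
have H : is_derive (0:R) (1:R) (fun u : R => s * t0 + s * u) (0 + s * 1).
  exact: is_deriveD.
rewrite add0r mulr1 in H.
have -> : (fun u : R => s * (t0 + u)) = (fun u : R => s * t0 + s * u).
  by apply: funext => u; rewrite mulrDr.
exact: H.
Qed.

Lemma abs_powR_is_derive (t0 r : R) : t0 != 0 ->
  is_derive (0:R) (1:R) (fun s : R => `|t0 + s| `^ r)
    (r * `|t0| `^ (r - 1) * Num.sg t0).
Proof.
move=> ht.
set sg := Num.sg t0.
have hst : sg * t0 = `|t0| by rewrite normrEsg.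
have pos : 0 < sg * t0 by rewrite hst normr_gt0.
have H1 := is_derive_affine sg t0.
have H2 : is_derive ((fun u : R => sg * (t0 + u)) 0) (1:R) (@powR R ^~ r)
    (r * (sg * t0) `^ (r - 1)).
  by rewrite /= addr0; exact: is_derive_powR.
have H3 := @is_derive1_chain _ _ _ _ _ H1 H2.
rewrite hst in H3.
apply: (near_eq_is_derive _ H3).
apply/nbhs_ballP; exists `|t0|; first by rewrite /= normr_gt0.
move=> s /=; rewrite /ball /= sub0r normrN ltr_norml => /andP[h1 h2].
congr (_ `^ _).
rewrite /sg; case: (ltgtP t0 0) => [t0n|t0p|t00].
- rewrite ltr0_norm // in h1 h2; rewrite ltr0_sg // ltr0_norm ?mulN1r //; lra.
- rewrite gtr0_norm // in h1 h2; rewrite gtr0_sg // gtr0_norm ?mul1r //; lra.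
- by move: ht; rewrite t00 eqxx.
Qed.

End K.

Section KK.
Variable R : realType.

Lemma st_point0 n (t : R) (x : 'rV[R]_n) : st_point t x 0 ord0 = t.
Proof. by rewrite /st_point mxE unlift_none. Qed.

Lemma kasner_ss n (a lbar : 'I_n -> R) p j k :
  kasner_metric a lbar p (sidx j) (sidx k) =
  if j == k then `|p 0 0| `^ (2 * a j) * lbar j ^+ 2 else 0.
Proof.
rewrite /kasner_metric mxE /sidx (inj_eq (@lift_inj _ ord0)) liftK.
by case: eqP.
Qed.

Lemma kasner_0s n (a lbar : 'I_n -> R) p k :
  kasner_metric a lbar p ord0 (sidx k) = 0.
Proof. by rewrite /kasner_metric mxE /sidx (negbTE (neq_lift _ _)). Qed.

Lemma pd_time n (a lbar : 'I_n -> R) (p : 'rV[R]_n.+1) j : p 0 0 != 0 ->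
  pd ord0 (fun y => kasner_metric a lbar y (sidx j) (sidx j)) p =
  lbar j ^+ 2 * (2 * a j * `|p 0 0| `^ (2 * a j - 1) * Num.sg (p 0 0)).
Proof.
move=> hp; rewrite /pd.
have := @line_derive R n.+1 (fun y => kasner_metric a lbar y (sidx j) (sidx j)) p (ev R ord0) 0.
rewrite scale0r addr0 => <-.
have -> : (fun s : R => kasner_metric a lbar (p + s *: ev R ord0) (sidx j) (sidx j))
  = (fun s : R => lbar j ^+ 2 *: `|p 0 0 + s| `^ (2 * a j)).
  apply: funext => s; rewrite kasner_ss eqxx.
rewrite mxE mxE ev_entry eqxx mulr1.
by rewrite mulrC.
have H := @abs_powR_is_derive R (p 0 0) (2 * a j) hp.
have H' := @is_deriveZ _ _ _ _ (lbar j ^+ 2) _ _ _ H.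
exact: (@derive_val _ _ _ _ _ _ _ H').
Qed.

End KK.

Lemma powRDp (R : realType) (x u v : R) : 0 < x -> x `^ (u + v) = x `^ u * x `^ v.
Proof. by move=> hx; rewrite powRD //; apply/implyP => _; rewrite gt_eqF. Qed.

Lemma powR_sq (R : realType) (x u : R) : 0 < x -> (x `^ u) ^+ 2 = x `^ (2 * u).
Proof. by move=> hx; rewrite expr2 -powRDp //; congr (_ `^ _); ring. Qed.

Theorem proposition4p1 (R : realType) (n : nat) (hn : (3 <= n)%N)
  (l b : 'I_n -> R) (mu tau0 : R)
  (hl : forall k, 0 < l k) (hb : offset_kasner b)
  (hmu : mu != 0) (htau : tau0 != 0) :
  let t0 := tau0^-1 in
  let expanding := 0 < tau0 in
  let s : R := if (0 < mu) == (0 < tau0) then 1 else -1 in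
  let a := fun k => s * b k + n%:R^-1 in
  let c := `|mu / tau0| `^ (qexp R n)^-1 in
  let lbar := fun k => `|t0| `^ (- a k) * c `^ (qexp R n / 2 - 1) * l k in
  let G := kasner_metric a lbar in
  let g := g_len l in
  let sig := fun x => mu *: sigma_bl b l x in
  kasner_exponents a /\ kasner_domain expanding t0 /\
  [/\
      (* the data set has a positive solution of the Lichnerowicz equation *)
      (exists phi, conformal_factor g sig tau0 phi),
      (* and every solution it generates is the Cauchy data of the slice t0 *)
      (forall phi, conformal_factor g sig tau0 phi ->
         generated_solution g sig tau0 phi = cauchy_data G t0),
      slice_metric G t0 = (fun x => c `^ (qexp R n - 2) *: g x)
    & slice_metric G (Num.sg t0) = g_len lbar].
Proof.
intros t0 expanding s a c lbar G g sig.
have hn0 : (n%:R : R) != 0 by rewrite pnatr_eq0 -lt0n; apply: leq_trans hn.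
have hs2 : s ^+ 2 = 1 by rewrite /s; case: ifP => _; rewrite ?expr1n ?sqrrN ?expr1n.
have hK := @kappa_gt0 R n hn; have hQ := @qexp_gt0 R n hn.
have ht0 : t0 != 0 by rewrite invr_eq0.
have hT : 0 < `|t0| by rewrite normr_gt0.
have hc : 0 < c by apply: powR_gt0; rewrite normr_gt0 mulf_neq0 // invr_eq0.
split.
  have [hb1 hb2] := hb.
  split.
    rewrite /a big_split /= -mulr_sumr hb1 mulr0 add0r sumr_const card_ord.
    by rewrite -[_ *+ n]mulr_natl mulfV.
  have -> : \sum_k a k ^+ 2 = s ^+ 2 * \sum_k b k ^+ 2 + (2 * s / n%:R) * \sum_k b k
      + \sum_(k < n) (n%:R ^+ 2)^-1.
    rewrite mulr_sumr mulr_sumr -!big_split /=; apply: eq_bigr => k _.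
    rewrite /a; field; by rewrite pnatr_eq0 -lt0n; apply: leq_trans hn.
  rewrite hb1 hb2 hs2 mulr0 addr0 sumr_const card_ord mul1r /kappa.
  rewrite -[_ *+ n]mulr_natl; field; by rewrite pnatr_eq0 -lt0n; apply: leq_trans hn.
split.
  rewrite /kasner_domain /expanding /t0; case: ifP => h; first by rewrite invr_gt0.
  by rewrite invr_lt0 lt_neqAle htau /= leNgt h.
have lbar_sq : forall j, lbar j ^+ 2 = `|t0| `^ (2 * - a j) * c `^ (qexp R n - 2) * l j ^+ 2.
  move=> j; rewrite /lbar !exprMn !powR_sq //.
  by congr (_ * _ `^ _ * _); field.
have stp : forall x : 'rV[R]_n, st_point t0 x 0 0 = t0 by move=> x; exact: st_point0.
have SM : slice_metric G t0 = (fun x => c `^ (qexp R n - 2) *: g x).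
  apply: funext => x; apply/matrixP => i1 i2.
  rewrite /slice_metric mxE /G kasner_ss [RHS]mxE /g /g_len mxE stp.
  case: (eqVneq i1 i2) => [->|_]; last by rewrite mulr0.
  rewrite lbar_sq !mulrA -powRDp //.
  by rewrite (_ : 2 * a i2 + 2 * - a i2 = 0) ?powRr0 ?mul1r //; ring.
split.
- by exists (fun _ => c); apply: const_solution.
- move=> phi Hphi.
  have -> := @phi_unique R n hn l b mu tau0 phi hl hb htau Hphi.
  rewrite /generated_solution /cauchy_data; congr (_, _); first by rewrite SM.
  apply: funext => x; apply/matrixP => i1 i2.
  rewrite /slice_sff [RHS]mxE -/c /sig /g /sigma_bl /g_len !mxE.
  have Z : forall (i : 'I_n.+1) k p, pd i (fun y => G y ord0 (sidx k)) p = 0.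
    by move=> i k p; apply: pd_const => y z; rewrite /G !kasner_0s.
  rewrite /christoffel1 !Z add0r sub0r mulNr opprK.
  case: (eqVneq i1 i2) => [<-|ne]; last first.
    rewrite pd_const ?mul0r ?mulr0 ?addr0 //.
    by move=> y z; rewrite /G !kasner_ss (negbTE ne).
  rewrite /G pd_time; last by rewrite stp.
  rewrite stp lbar_sq.
  have hX : 0 < `|t0| `^ (2 * - a i1) by apply: powR_gt0.
  have Yeq : `|t0| `^ (2 * a i1 - 1) = `|t0|^-1 / `|t0| `^ (2 * - a i1).
    apply: (@mulIf _ (`|t0| `^ (2 * - a i1))); first by rewrite gt_eqF.
    rewrite mulfVK ?gt_eqF // -powR_inv1; last exact: ltW.
    rewrite -powRDp //; congr (_ `^ _); ring.
  have sgeq : Num.sg t0 = tau0 * `|t0|.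
    rewrite /t0; case: (ltgtP tau0 0) => [tn|tp|t00].
    - rewrite ltr0_sg ?invr_lt0 // ltr0_norm ?invr_lt0 // mulrN mulfV //.
    - by rewrite gtr0_sg ?invr_gt0 // gtr0_norm ?invr_gt0 // mulfV.
    - by move: htau; rewrite t00 eqxx.
  have I3 : c `^ (qexp R n - 2) = c `^ qexp R n / c ^+ 2.
    by rewrite powRDp // (@powR_invn _ _ 2) //; exact: ltW.
  have CC : c `^ (qexp R n) = `|mu / tau0|.
    by rewrite /c -powRrM mulVf ?gt_eqF // powRr1.
  have I2 : mu = s * tau0 * c `^ qexp R n.
    rewrite CC /s; case: (ltgtP mu 0) => [mn|mp|m0]; last by move: hmu; rewrite m0 eqxx.
    - case: (ltgtP tau0 0) => [tn|tp|t00]; last by move: htau; rewrite t00 eqxx.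
      + rewrite /= gtr0_norm; last by rewrite nmulr_rgt0 // invr_lt0.
        by field.
      + rewrite /= ltr0_norm; last by rewrite nmulr_rlt0 // invr_gt0.
        by field.
    - case: (ltgtP tau0 0) => [tn|tp|t00]; last by move: htau; rewrite t00 eqxx.
      + rewrite /= ltr0_norm; last by rewrite pmulr_rlt0 // invr_lt0.
        by field.
      + rewrite /= gtr0_norm; last by rewrite pmulr_rgt0 // invr_gt0.
        by field.
  rewrite Yeq sgeq I3 {1}I2 /a.
  rewrite /=.
  field.
  apply/and4P; split; [exact: lt0r_neq0 hX | exact: lt0r_neq0 hT | exact: hn0 | exact: lt0r_neq0 hc].
- exact: SM.
- apply: funext => x; apply/matrixP => i1 i2.
  rewrite /slice_metric mxE /G kasner_ss /g_len [RHS]mxE.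
  have -> : st_point (Num.sg t0) x 0 0 = Num.sg t0 by exact: st_point0.
  by rewrite normr_sg ht0 powR1 /= mul1r.
Qed.
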